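(* Let $A\subseteq B$ be commutative semirings, $S=A[x_1,\dots,x_n]$, and $\rho$ a congruence on $B$ with $\rho\neq B\times B$. Then: (1) $Z_\rho(\{(0,1)\})(B)=\emptyset$ and $Z_\rho(\{(f,f)\})(B)=B^n$ for all $f\in S$; (2) for non-empty $T_1,T_2\subseteq S\times S$, $Z_\rho(T_1)(B)\cup Z_\rho(T_2)(B)\subseteq Z_\rho(T_1\ast T_2)(B)$; (3) the intersection of any family of $\rho$-algebraic varieties is a $\rho$-algebraic variety.
   Context: Semirings are commutative with $0$ and $1\neq0$, $0a=0$; congruences are equivalence relations compatible with $+,\cdot$. For non-empty $T\subseteq S\times S$, $Z_\rho(T)(B)=\{P\in B^n:(f(P),g(P))\in\rho\ \forall(f,g)\in T\}$; a $\rho$-algebraic variety is a set of this form. The twisted product is $(f_1,g_1)\ast(f_2,g_2)=(f_1f_2+g_1g_2,\ f_1g_2+g_1f_2)$ and $T_1\ast T_2=\{t_1\ast t_2:t_1\in T_1,t_2\in T_2\}$. *)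

(* Defs.v *)
From HB Require Import structures.
From mathcomp Require Import all_boot all_order all_algebra.
Set Implicit Arguments. Unset Strict Implicit. Unset Printing Implicit Defensive.
Import GRing.Theory.
Local Open Scope ring_scope.

(* The polynomial semiring A[x_0, ..., x_(k-1)], built as the iterated
   univariate polynomial semiring A[x_0][x_1]...[x_(k-1)] (MathComp's {poly R}
   is available over any (commutative, non-trivial) semiring). *)
Fixpoint mpolyS (A : comNzSemiRingType) (k : nat) : comNzSemiRingType :=
  match k with
  | 0 => A
  | k'.+1 => {poly mpolyS A k'}
  end.

Fixpoint evalN (A B : comNzSemiRingType) (iota : A -> B) (k : nat)
  : mpolyS A k -> (nat -> B) -> B :=
  match k return mpolyS A k -> (nat -> B) -> B with
  | 0 => fun a _ => iota a
  | k'.+1 => fun p P =>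
      \sum_(i < size (p : {poly mpolyS A k'}))
        evalN iota (p : {poly mpolyS A k'})`_i P * P k' ^+ i
  end.

Definition mpeval (A B : comNzSemiRingType) (iota : A -> B) (n : nat)
  (f : mpolyS A n) (P : 'I_n -> B) : B :=
  evalN iota f (fun i : nat =>
    match @insub nat (fun j : nat => (j < n)%N) 'I_n i with
    | Some j => P j | None => 0 end).

Definition congruence (B : comNzSemiRingType) (rho : B -> B -> Prop) : Prop :=
  [/\ (forall a, rho a a),
      (forall a b, rho a b -> rho b a),
      (forall a b c, rho a b -> rho b c -> rho a c),
      (forall a b c d, rho a b -> rho c d -> rho (a + c) (b + d)) &
      (forall a b c d, rho a b -> rho c d -> rho (a * c) (b * d))].

Definition Zrho (A B : comNzSemiRingType) (iota : A -> B) (n : nat)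
  (rho : B -> B -> Prop) (T : mpolyS A n * mpolyS A n -> Prop)
  : ('I_n -> B) -> Prop :=
  fun P => forall f g, T (f, g) -> rho (mpeval iota f P) (mpeval iota g P).

Definition rho_variety (A B : comNzSemiRingType) (iota : A -> B) (n : nat)
  (rho : B -> B -> Prop) (V : ('I_n -> B) -> Prop) : Prop :=
  exists T : mpolyS A n * mpolyS A n -> Prop,
    (exists t, T t) /\ V = Zrho iota rho T.

Definition twist (S : comNzSemiRingType) (t1 t2 : S * S) : S * S :=
  (t1.1 * t2.1 + t1.2 * t2.2, t1.1 * t2.2 + t1.2 * t2.1).

Definition twistset (S : comNzSemiRingType) (T1 T2 : S * S -> Prop)
  : S * S -> Prop :=
  fun t => exists t1 t2, T1 t1 /\ T2 t2 /\ t = twist t1 t2.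

(* Main.v *)
Require Import Defs.
From mathcomp Require Import all_boot all_order all_algebra.
Import GRing.Theory.
Local Open Scope ring_scope.

From Stdlib Require Import FunctionalExtensionality PropExtensionality.

Section Ev.
Variables (A B : comNzSemiRingType) (iota : {rmorphism A -> B}) (P : nat -> B).

Fixpoint ev (k : nat) : {rmorphism mpolyS A k -> B} :=
  match k return {rmorphism mpolyS A k -> B} with
  | 0 => iota
  | k'.+1 => (horner_morph (fun x : mpolyS A k' => mulrC (P k') (ev k' x))
               : {rmorphism {poly mpolyS A k'} -> B})
  end.

Lemma evalN_ev k (p : mpolyS A k) : evalN iota p P = ev k p.
Proof.
elim: k p => [//|k IH] p /=.
rewrite /horner_morph (@horner_coef_wide _ (size (p : {poly mpolyS A k}))).
  apply: eq_bigr => i _; rewrite coef_map IH //.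
by rewrite map_polyE; apply: (leq_trans (size_Poly _)); rewrite size_map.
Qed.
End Ev.

Lemma mpeval_ev (A B : comNzSemiRingType) (iota : {rmorphism A -> B}) n P :
  exists e : {rmorphism mpolyS A n -> B}, forall f, mpeval iota f P = e f.
Proof. eexists => f; rewrite /mpeval evalN_ev; reflexivity. Qed.

Theorem lemma3p3 (A B : comNzSemiRingType) (iota : {rmorphism A -> B})
  (iota_inj : injective iota) (n : nat) (rho : B -> B -> Prop)
  (rho_cong : congruence rho) (rho_proper : exists a b : B, ~ rho a b) :
  (* (1) *)
  ((forall P : 'I_n -> B,
      ~ Zrho iota rho (fun t : mpolyS A n * mpolyS A n => t = (0, 1)) P) /\
   (forall (f : mpolyS A n) (P : 'I_n -> B),
      Zrho iota rho (fun t : mpolyS A n * mpolyS A n => t = (f, f)) P)) /\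
  (* (2) *)
  (forall T1 T2 : mpolyS A n * mpolyS A n -> Prop,
      (exists t, T1 t) -> (exists t, T2 t) ->
      forall P : 'I_n -> B,
        Zrho iota rho T1 P \/ Zrho iota rho T2 P ->
        Zrho iota rho (twistset T1 T2) P) /\
  (* (3) *)
  (forall (I : Type) (V : I -> ('I_n -> B) -> Prop),
      (forall i, rho_variety iota rho (V i)) ->
      rho_variety iota rho (fun P => forall i, V i P)).
Proof.
case: rho_cong => rr rs rt rD rM.
have r01 : ~ rho 0 1.
  move=> h; case: rho_proper => a [b]; apply.
  have ha : forall c, rho 0 c.
    by move=> c; have := rM c c 0 1 (rr c) h; rewrite mulr0 mulr1.
  exact: rt (rs _ _ (ha a)) (ha b).
split; [split|split].
- move=> P H; have := H 0 1 erefl.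
  by have [e He] := @mpeval_ev _ _ iota n P; rewrite !He ?rmorph0 ?rmorph1.
- by move=> f P g h [-> ->].
- move=> T1 T2 _ _ P HP f g [t1 [t2 [H1 [H2 E]]]].
  case: t1 H1 E => f1 g1 H1; case: t2 H2 => f2 g2 H2 /= [-> ->].
  have [e He] := @mpeval_ev _ _ iota n P; rewrite !He !rmorphD !rmorphM.
  case: HP => HP.
  + have h := HP _ _ H1; rewrite !He in h.
    rewrite [X in rho _ X]addrC.
    by apply: rD; apply: rM => //; apply: rs.
  + have h := HP _ _ H2; rewrite !He in h.
    by apply: rD; apply: rM => //; apply: rs.
- move=> I V HV.
  exists (fun t => t = (0, 0) \/ exists i (T' : mpolyS A n * mpolyS A n -> Prop),
            V i = Zrho iota rho T' /\ T' t).
  split; first by exists (0, 0); left.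
  apply: functional_extensionality => P; apply: propositional_extensionality.
  split.
  + move=> H f g [[-> ->]|[i [T' [E Ht]]]]; first exact: rr.
    by have := H i; rewrite E; apply.
  + move=> H i; have [T' [_ E]] := HV i; rewrite E => f g Ht.
    apply: H; right; exists i, T'; split=> //.
Qed.
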